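(* Assume all thermal noise is zero ($\mathbf N_T=\mathbf 0$, $\mathbf N_D=\mathbf 0$), and let $\hat{\mathbf H}=\mathbf Y_T\mathbf S_T^\dagger$ be the least-squares channel estimate. If the jammer is not eclipsed (in the sense of eclipsing with channel estimation defined in the context), then the optimization problem $$\min_{\tilde{\mathbf S}_D\in\mathcal S^{U\times D},\ \tilde{\mathbf P}\in\mathscr G_{B-I}(\mathbb C^B)}\ \big\|\tilde{\mathbf P}(\mathbf Y_D-\hat{\mathbf H}\tilde{\mathbf S}_D)\big\|_F^2$$ has the unique minimizer $(\hat{\mathbf P},\hat{\mathbf S}_D)=(\mathbf I_B-\mathbf J\mathbf J^\dagger,\ \mathbf S_D)$.
   Context: Let $B,U,I,T,D$ be positive integers with $B\ge U+I$ and $T\ge U$. Let $\mathcal S=\{(\pm1\pm i)/\sqrt2\}\subset\mathbb C$ (QPSK). Let $\mathbf H\in\mathbb C^{B\times U}$, $\mathbf J\in\mathbb C^{B\times I}$ with $[\mathbf H,\mathbf J]$ of full column rank $U+I$. Let $\mathbf S_T\in\mathbb C^{U\times T}$ be a pilot matrix of full row rank $U$ (so $\mathbf S_T\mathbf S_T^\dagger=\mathbf I_U$), $\mathbf S_D\in\mathcal S^{U\times D}$, $\mathbf W_T\in\mathbb C^{I\times T}$, $\mathbf W_D\in\mathbb C^{I\times D}$, noise $\mathbf N_T,\mathbf N_D$, and $\mathbf Y_T=\mathbf H\mathbf S_T+\mathbf J\mathbf W_T+\mathbf N_T$, $\mathbf Y_D=\mathbf H\mathbf S_D+\mathbf J\mathbf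 W_D+\mathbf N_D$. $\mathbf A^\dagger$ is the Moore–Penrose pseudoinverse. $\mathscr G_{B-I}(\mathbb C^B)$ denotes the set of $B\times B$ orthogonal projections onto $(B-I)$-dimensional subspaces of $\mathbb C^B$. Eclipsing with channel estimation: the jammer is eclipsed if there exists $\tilde{\mathbf S}_D\in\mathcal S^{U\times D}\setminus\{\mathbf S_D\}$ such that $\begin{bmatrix}\mathbf S_D-\tilde{\mathbf S}_D\\ \mathbf W_D-\mathbf W_T\mathbf S_T^\dagger\tilde{\mathbf S}_D\end{bmatrix}\in\mathbb C^{(U+I)\times D}$ has rank at most $I$. *)

(* Defs.v *)
(* Complex scalars: an arbitrary numClosedFieldType C
   (the algebraic model of the complex numbers, with conjugation x^* ). *)
From HB Require Import structures.
From mathcomp Require Import all_boot all_order all_algebra.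
From Stdlib Require Import ClassicalEpsilon.
Set Implicit Arguments.
Unset Strict Implicit.
Unset Printing Implicit Defensive.
Import Order.TTheory GRing.Theory Num.Theory.
Local Open Scope ring_scope.

Definition adjmx (C : numClosedFieldType) m n (A : 'M[C]_(m, n)) : 'M[C]_(n, m) :=
  (map_mx (fun x => x^*) A)^T.

Definition is_pinv (C : numClosedFieldType) m n (A : 'M[C]_(m, n)) (X : 'M[C]_(n, m)) : Prop :=
  [/\ A *m X *m A = A, X *m A *m X = X,
      adjmx (A *m X) = A *m X & adjmx (X *m A) = X *m A].

(* The Moore--Penrose pseudoinverse A^dagger (the unique X with is_pinv A X;
   chosen by Hilbert's epsilon, it exists for every matrix). *)
Definition pinv (C : numClosedFieldType) m n (A : 'M[C]_(m, n)) : 'M[C]_(n, m) :=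
  epsilon (inhabits 0) (is_pinv A).

Definition qpsk (C : numClosedFieldType) (x : C) : Prop :=
  exists a b : bool, x = ((-1) ^+ a + (-1) ^+ b * 'i) / sqrtC 2.

Definition qpsk_mx (C : numClosedFieldType) m n (S : 'M[C]_(m, n)) : Prop :=
  forall i j, qpsk (S i j).

Definition frob2 (C : numClosedFieldType) m n (A : 'M[C]_(m, n)) : C :=
  \sum_(i < m) \sum_(j < n) `|A i j| ^+ 2.

(* P is an orthogonal projection of C^B onto a k-dimensional subspace,
   i.e. P belongs to the Grassmannian G_k(C^B) viewed as projection matrices *)
Definition grass_proj (C : numClosedFieldType) B (k : nat) (P : 'M[C]_B) : Prop :=
  [/\ P *m P = P, adjmx P = P & \rank P = k].

Definition eclipsed (C : numClosedFieldType) U I T D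
  (S_T : 'M[C]_(U, T)) (S_D : 'M[C]_(U, D))
  (W_T : 'M[C]_(I, T)) (W_D : 'M[C]_(I, D)) : Prop :=
  exists St : 'M[C]_(U, D), [/\ qpsk_mx St, St <> S_D &
    (\rank (col_mx (S_D - St) (W_D - W_T *m pinv S_T *m St)) <= I)%N].

(* Main.v *)
Require Import Defs.
From HB Require Import structures.
From mathcomp Require Import all_boot all_order all_algebra.
From mathcomp Require Import zify.
From Stdlib Require Import ClassicalEpsilon.
Import Order.TTheory GRing.Theory Num.Theory.
Local Open Scope ring_scope.

Section Adj.
Variable C : numClosedFieldType.

Lemma adjmxE m n (A : 'M[C]_(m, n)) : adjmx A = (map_mx (@Num.Def.conjC C) A)^T.
Proof. by []. Qed.

Lemma adjmxM m n p (A : 'M[C]_(m, n)) (B : 'M[C]_(n, p)) :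
  adjmx (A *m B) = adjmx B *m adjmx A.
Proof. by rewrite !adjmxE map_mxM trmx_mul. Qed.

Lemma adjmxK m n (A : 'M[C]_(m, n)) : adjmx (adjmx A) = A.
Proof. by apply/matrixP => i j; rewrite !mxE conjCK. Qed.

Lemma adjmxB m n (A B : 'M[C]_(m, n)) : adjmx (A - B) = adjmx A - adjmx B.
Proof. by apply/matrixP => i j; rewrite !mxE rmorphB. Qed.

Lemma adjmx1 n : adjmx (1%:M : 'M[C]_n) = 1%:M.
Proof. by rewrite adjmxE map_mx1 trmx1. Qed.

Lemma adjmx0 m n : adjmx (0 : 'M[C]_(m, n)) = 0.
Proof. by apply/matrixP => i j; rewrite !mxE conjC0. Qed.

Lemma adjmx_inv n (A : 'M[C]_n) : adjmx (invmx A) = invmx (adjmx A).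
Proof. by rewrite !adjmxE map_invmx trmx_inv. Qed.

Lemma rank_adjmx m n (A : 'M[C]_(m, n)) : \rank (adjmx A) = \rank A.
Proof. by rewrite adjmxE mxrank_tr mxrank_map. Qed.

Lemma adj_pos m n (A : 'M[C]_(m, n)) : A *m adjmx A = 0 -> A = 0.
Proof.
move=> h; apply/matrixP => i j; rewrite mxE.
have := congr1 (fun M : 'M[C]_m => M i i) h; rewrite !mxE.
under eq_bigr => k _ do rewrite !mxE -normCK.
move/eqP; rewrite psumr_eq0; last by move=> k _; rewrite exprn_ge0.
move/allP => /(_ j (mem_index_enum _)) /=.
by rewrite sqrf_eq0 normr_eq0 => /eqP.
Qed.

Lemma frob2_0 m n : frob2 (0 : 'M[C]_(m, n)) = 0.
Proof. by rewrite /frob2 big1 // => i _; rewrite big1 // => j _; rewrite mxE normr0 expr0n. Qed.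

Lemma frob2_pos m n (A : 'M[C]_(m, n)) : A != 0 -> 0 < frob2 A.
Proof.
move=> hA; rewrite lt_def; apply/andP; split; last first.
  by apply: sumr_ge0 => i _; apply: sumr_ge0 => j _; rewrite exprn_ge0.
apply: contra hA => /eqP h; apply/eqP/matrixP => i j; rewrite mxE.
move/eqP: h; rewrite psumr_eq0; last first.
  by move=> k _; apply: sumr_ge0 => l _; rewrite exprn_ge0.
move/allP => /(_ i (mem_index_enum _)) /=.
rewrite psumr_eq0; last by move=> k _; rewrite exprn_ge0.
move/allP => /(_ j (mem_index_enum _)) /=.
by rewrite sqrf_eq0 normr_eq0 => /eqP.
Qed.

End Adj.
Arguments adj_pos {C m n A}.
Arguments rank_adjmx {C m n}.
Arguments adjmxK {C m n}.
Arguments adjmxM {C m n p}.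
Arguments frob2_pos {C m n}.
Section Pinv.
Variable C : numClosedFieldType.

Lemma is_pinv_adj m n (A : 'M[C]_(m, n)) X : is_pinv A X -> is_pinv (adjmx A) (adjmx X).
Proof.
case=> h1 h2 h3 h4; split.
- by rewrite -!adjmxM mulmxA h1.
- by rewrite -!adjmxM mulmxA h2.
- by rewrite -adjmxM h4.
- by rewrite -adjmxM h3.
Qed.

Arguments is_pinv_adj {m n A X}.
Lemma pinv_spec m n (A : 'M[C]_(m, n)) : (exists X, is_pinv A X) -> is_pinv A (pinv A).
Proof. exact: epsilon_spec. Qed.

Lemma pinv_col m n (A : 'M[C]_(m, n)) : \rank A = n -> exists X, is_pinv A X.
Proof.
move=> hr.
set G := adjmx A *m A.
have hG : G \in unitmx.
  rewrite -row_free_unit /row_free.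
  set K := kermx G.
  have hK : K *m G = 0 by rewrite mulmx_ker.
  have h1 : (K *m adjmx A) *m adjmx (K *m adjmx A) = 0.
    by rewrite adjmxM adjmxK !mulmxA -(mulmxA K) hK mul0mx.
  have h2 := adj_pos h1.
  have h3 : (adjmx K)^T *m A^T = 0 *m A^T.
    by rewrite mul0mx -trmx_mul -[A]adjmxK -adjmxM h2 adjmx0 trmx0.
  have hfree : row_free A^T by rewrite /row_free mxrank_tr hr.
  have h4 := row_free_inj hfree h3.
  have hK0 : K = 0.
    by rewrite -[K]adjmxK -[adjmx K]trmxK h4 trmx0 adjmx0.
  have := mxrank_ker G; rewrite -/K hK0 mxrank0 => h.
  apply/eqP; have := rank_leq_row G; lia.
exists (invmx G *m adjmx A).
have hXA : invmx G *m adjmx A *m A = 1%:M by rewrite -mulmxA mulVmx.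
split.
- by rewrite -mulmxA hXA mulmx1.
- by rewrite hXA mul1mx.
- rewrite !adjmxM adjmxK adjmx_inv adjmxM adjmxK -/G.
  by rewrite mulmxA.
- by rewrite hXA adjmx1.
Qed.

Lemma pinv_row m n (A : 'M[C]_(m, n)) : \rank A = m -> is_pinv A (pinv A).
Proof.
move=> hr; apply: pinv_spec.
have [X hX] := @pinv_col _ _ (adjmx A) (etrans (rank_adjmx A) hr).
exists (adjmx X); have := is_pinv_adj hX; by rewrite adjmxK.
Qed.

End Pinv.
Section Main.
Variable C : numClosedFieldType.

Lemma kerlem b k (P : 'M[C]_b) (K : 'M[C]_(b, k)) : P *m K = 0 -> (\rank K + \rank P <= b)%N.
Proof.
move=> h.
have h1 : (K^T <= kermx P^T)%MS by apply/sub_kermxP; rewrite -trmx_mul h trmx0.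
have := mxrankS h1; rewrite mxrank_ker !mxrank_tr.
have := rank_leq_row P; lia.
Qed.

Lemma qpsk_neq0 (x : C) : qpsk x -> x != 0.
Proof.
case=> a [b ->]; rewrite mulf_eq0 invr_eq0 sqrtC_eq0 negb_or pnatr_eq0 andbT.
apply/negP => /eqP h.
have h2 : ((-1) ^+ b * 'i) ^+ 2 = ((-1) ^+ a) ^+ 2 :> C.
  by move/eqP: h; rewrite addr_eq0 => /eqP ->; rewrite sqrrN.
move: h2; rewrite exprMn !sqrr_sign mul1r sqrCi => /eqP.
by rewrite -subr_eq0 -opprD oppr_eq0 -mulr2n pnatr_eq0.
Qed.

Lemma qpskN (x : C) : qpsk x -> qpsk (- x).
Proof.
case=> a [b ->]; exists (~~ a), (~~ b); rewrite -mulNr; congr (_ / _).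
by case: a; case: b => /=; rewrite ?expr1 ?expr0 ?opprD ?mulNr ?mul1r ?mulN1r ?opprK.
Qed.

End Main.
Arguments kerlem {C b k P K}.
Arguments qpsk_neq0 {C x}.
Arguments qpskN {C x}.
Theorem theorem3 (C : numClosedFieldType) (B U I T D : nat)
  (H : 'M[C]_(B, U)) (J : 'M[C]_(B, I))
  (S_T : 'M[C]_(U, T)) (S_D : 'M[C]_(U, D))
  (W_T : 'M[C]_(I, T)) (W_D : 'M[C]_(I, D))
  (N_T : 'M[C]_(B, T)) (N_D : 'M[C]_(B, D)) :
  (0 < B)%N -> (0 < U)%N -> (0 < I)%N -> (0 < T)%N -> (0 < D)%N ->
  (U + I <= B)%N -> (U <= T)%N ->
  \rank (row_mx H J) = (U + I)%N ->
  \rank S_T = U ->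
  qpsk_mx S_D ->
  N_T = 0 -> N_D = 0 ->
  let Y_T := H *m S_T + J *m W_T + N_T in
  let Y_D := H *m S_D + J *m W_D + N_D in
  let Hhat := Y_T *m pinv S_T in
  let obj := fun (P : 'M[C]_B) (St : 'M[C]_(U, D)) => frob2 (P *m (Y_D - Hhat *m St)) in
  let Phat := 1%:M - J *m pinv J in
  ~ eclipsed S_T S_D W_T W_D ->
  grass_proj (B - I) Phat /\
  (forall (P : 'M[C]_B) (St : 'M[C]_(U, D)),
      grass_proj (B - I) P -> qpsk_mx St ->
      (P, St) <> (Phat, S_D) -> obj Phat S_D < obj P St).
Proof.
move=> hB hU hI hT hD hUIB hUT hrk hrS hSD hNT hND Y_T Y_D Hhat obj Phat hne.
set XT := pinv S_T; set XJ := pinv J.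
have hrJ : \rank J = I.
  have := rank_leq_col J.
  have := mxrank_adds_leqif H^T J^T; case=> h _.
  move: h; rewrite addsmxE -tr_row_mx !mxrank_tr hrk.
  have := rank_leq_col H; lia.
have [hJ1 hJ2 hJ3 hJ4] : is_pinv J XJ by apply: pinv_spec; apply: pinv_col.
have [hS1 hS2 hS3 hS4] : is_pinv S_T XT by apply: pinv_row.
have hST : S_T *m XT = 1%:M.
  have /row_freeP [R hR] : row_free S_T by rewrite /row_free hrS.
  by rewrite -hR -{1}[XT]mulmx1 -hR !mulmxA hS1.
have hHhat : Hhat = H + J *m (W_T *m XT).
  by rewrite /Hhat /Y_T hNT addr0 mulmxDl -!mulmxA hST mulmx1.
set G := row_mx H J.
have hres : forall St, Y_D - Hhat *m St = G *m col_mx (S_D - St) (W_D - W_T *m XT *m St).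
  move=> St; rewrite mul_row_col hHhat /Y_D hND addr0 !mulmxBr mulmxDl !mulmxA.
  by rewrite opprD addrACA.
have hPJ : Phat *m J = 0.
  by rewrite /Phat -/XJ mulmxBl mul1mx hJ1 subrr.
have hobj0 : obj Phat S_D = 0.
  rewrite /obj hres subrr /G mul_row_col mulmx0 add0r mulmxA hPJ mul0mx.
  exact: frob2_0.
have hPP : Phat *m Phat = Phat.
  rewrite /Phat -/XJ mulmxBl mul1mx mulmxBr mulmx1 mulmxA hJ1.
  by rewrite subrr subr0.
have hPadj : adjmx Phat = Phat by rewrite /Phat -/XJ adjmxB adjmx1 hJ3.
have hPrk : \rank Phat = (B - I)%N.
  have h1 := kerlem hPJ.
  have h2 : (1%:M : 'M[C]_B) = Phat + J *m XJ by rewrite /Phat -/XJ subrK.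
  have := mxrank_add Phat (J *m XJ); rewrite -h2 mxrank1.
  have := mxrankM_maxl J XJ.
  move: h1; rewrite hrJ; move: (\rank Phat) (\rank (J *m XJ)) => r s a b c; have c' : (B <= addn r s)%N := c; lia.
split; first by split.
move=> P St [hP1 hP2 hP3] hSt hneq.
rewrite hobj0 /obj hres.
apply: frob2_pos.
have hGfree : row_free G^T by rewrite /row_free mxrank_tr hrk.
have [eSt|nSt] := eqVneq St S_D; last first.
  apply/eqP => h0.
  have := kerlem h0; rewrite -mxrank_tr trmx_mul mxrankMfree // mxrank_tr hP3 => hle.
  apply: hne; exists St; split => //; first exact/eqP.
  rewrite -(leq_add2r (B - I)) subnKC; first exact: hle.
  by apply: leq_trans hUIB; apply: leq_addl.
subst St.
set E := W_D - W_T *m XT *m S_D.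
have hPne : P <> Phat by move=> eP; apply: hneq; rewrite eP.
rewrite subrr /G mul_row_col mulmx0 add0r.
have hrE : \rank E = I.
  pose i0 : 'I_U := Ordinal hU.
  pose j0 : 'I_D := Ordinal hD.
  set s := S_D i0 j0.
  pose St' := \matrix_(i, j) (if (i == i0) && (j == j0) then - S_D i j else S_D i j).
  have hSt' : qpsk_mx St'.
    by move=> i j; rewrite mxE; case: ifP => _; [apply: qpskN|]; apply: hSD.
  have hs0 : s != 0 := qpsk_neq0 (hSD i0 j0).
  have hDelta : S_D - St' = (s *+ 2) *: delta_mx i0 j0.
    apply/matrixP => i j; rewrite !mxE.
    case: ifP => h.
      by move/andP: h => [/eqP -> /eqP ->]; rewrite opprK mulr1 mulr2n.
    by rewrite subrr mulr0.
  have hSne : St' <> S_D.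
    move/matrixP => /(_ i0 j0); rewrite mxE !eqxx /= => h.
    have : s *+ 2 == 0 by rewrite mulr2n /s -{1}h addNr.
    by rewrite mulrn_eq0 /= (negbTE hs0).
  have hM : col_mx (S_D - St') (W_D - W_T *m XT *m St') =
      col_mx 1%:M (W_T *m XT) *m (S_D - St') + col_mx 0 E.
    rewrite mul_col_mx mul1mx add_col_mx addr0; congr col_mx.
    by rewrite /E mulmxBr [in RHS]addrC [in RHS]addrA subrK.
  have hr1 : (\rank (col_mx (S_D - St') (W_D - W_T *m XT *m St')) <= 
      addn (\rank (col_mx 1%:M (W_T *m XT) *m (S_D - St'))) (\rank E))%N.
    by rewrite hM -(rank_col_0mx U E); apply: mxrank_add.
  have hr2 : (\rank (col_mx 1%:M (W_T *m XT) *m (S_D - St')) <= 1)%N.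
    apply: leq_trans (mxrankM_maxr _ _) _; rewrite hDelta.
    apply: leq_trans (mxrank_scale _ _) _; by rewrite mxrank_delta.
  have hnot : ~ (\rank (col_mx (S_D - St') (W_D - W_T *m XT *m St')) <= I)%N.
    by move=> hle; apply: hne; exists St'; split.
  have := rank_leq_row E; lia.
have /row_freeP [R hR] : row_free E by rewrite /row_free hrE.
apply/eqP => hPJE; apply: hPne.
have hPJ' : P *m J = 0.
  by rewrite -[P *m J]mulmx1 -hR !mulmxA -(mulmxA P) hPJE mul0mx.
set Q := 1%:M - P.
have hQJ : Q *m J = J by rewrite /Q mulmxBl mul1mx hPJ' subr0.
have hPQ : P *m Q = 0 by rewrite /Q mulmxBr mulmx1 hP1 subrr.
have hrQ := kerlem hPQ.
have hsub : (J^T <= Q^T)%MS by rewrite -hQJ trmx_mul submxMl.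
have [_ heq] := mxrank_leqif_eq hsub.
have /eqmxP hJQ : (J^T == Q^T)%MS.
  have h5 := mxrankS hsub; rewrite !mxrank_tr hrJ in h5.
  rewrite -heq !mxrank_tr hrJ eqn_leq h5 /=; move: hrQ; rewrite hP3 => hrQ.
  rewrite -(leq_add2r (B - I)) subnKC; first exact: hrQ.
  by apply: leq_trans hUIB; apply: leq_addl.
have /submxP [Z hZ] : (Q^T <= J^T)%MS by rewrite -hJQ submx_refl.
have hQZ : Q = J *m Z^T by rewrite -[Q]trmxK hZ trmx_mul trmxK.
have hJXQ : J *m XJ *m Q = Q by rewrite hQZ !mulmxA hJ1.
have hJXP : J *m XJ *m P = 0.
  by rewrite -hJ3 -hP2 -adjmxM mulmxA hPJ' mul0mx adjmx0.
have hJX : J *m XJ = Q by rewrite -[in RHS]hJXQ /Q mulmxBr mulmx1 hJXP subr0.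
by rewrite /Phat -/XJ hJX /Q subKr.
Qed.
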